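(* Let $C_i=\{c_i^1,\ldots,c_i^{j_i}\}$, $1\le i\le k$, be pairwise disjoint sets of variables, and for $1\le u\le n$ let $F_u=\{f_u^1,\ldots,f_u^{n+1}\}\subseteq\mathbb{C}[\bigcup_{i=1}^kC_i]$ be sets of polynomials such that: (i) for each fixed $u$, the polynomials $f_u^1,\ldots,f_u^{n+1}$ are (nonzero) multihomogeneous polynomials in some sets of variables $C_{u^1},\ldots,C_{u^{s_u}}$, all with the same multidegree; (ii) if $u\neq v$ then $F_u$ and $F_v$ involve different (disjoint) collections of the sets $C_i$; (iii) for each $u$, if $l\neq m$ then no monomial of $f_u^l$ is a monomial of $f_u^m$. Let $A=(f_u^l)_{1\le u\le n,\,1\le l\le n+1}$ be the $n\times(n+1)$ matrix, let $O$ be any $n\times(n+1)$ matrix over $\mathbb{T}$, and let $\mathrm{Cram}_O(A)=(S_1,\ldots,S_{n+1})$. Then: 1. $S_1,\ldots,S_{n+1}$ are nonzero multihomogeneous polynomials in the sets of variables $C_1,\ldots,C_k$, all with the same multidegree; 2. for each $l$, if $\sigma\ne\tau$ are two different bijections $\{1,\dots,n\}\to\{1,\dots,n+1\}\setminus\{l\}$ which appear in the expansion of $S_l$, then every monomial of $\prod_{u=1}^n f_u^{\sigma(u)}$ is different from every monomial of $\prod_{u=1}^n f_u^{\tau(u)}$; 3. if $l\ne m$, then $S_l$ and $S_m$ have no common monomial.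
   Context: $\mathbb{T}=(\mathbb{R},\max,+)$. For an $n\times n$ tropical matrix $O$, $|O|_t=\max_{\sigma\in\Sigma_n}\sum_i o_{i\sigma(i)}$. For an $n\times n$ matrix $A$ over a ring, the pseudo-determinant is $\Delta_O(A)=\sum(-1)^{i(\sigma)}a_{1\sigma(1)}\cdots a_{n\sigma(n)}$, summed over those $\sigma\in\Sigma_n$ with $\sum_i o_{i\sigma(i)}=|O|_t$ (these are the permutations ''appearing in the expansion''), $(-1)^{i(\sigma)}$ being the sign. For $n\times(n+1)$ matrices, $O^{i}$, $A^{i}$ denote the matrices with the $i$-th column deleted, and $\mathrm{Cram}_O(A)=(S_1,\ldots,S_{n+1})$ with $S_i=\Delta_{O^{i}}(A^{i})$. *)

(* Defs.v *)
(* coefficients C = R[i] (complex R), tropical semiring over R, R : realType. *)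
From HB Require Import structures.
From mathcomp Require Import all_boot all_order all_algebra all_fingroup.
From mathcomp Require Import reals.
From mathcomp Require Import complex.
From mathcomp Require Import mpoly.
Set Implicit Arguments.
Unset Strict Implicit.
Unset Printing Implicit Defensive.
Import Order.TTheory GRing.Theory Num.Theory.
Local Open Scope ring_scope.

Definition tweight (R : realType) (n : nat) (O : 'M[R]_n) (s : 'S_n) : R :=
  \sum_i O i (s i).

Definition tdet (R : realType) (n : nat) (O : 'M[R]_n) : R :=
  \big[Num.max/tweight O 1%g]_(s : 'S_n) tweight O s.

(* s "appears in the expansion": its tropical weight attains |O|_t *)
Definition appears (R : realType) (n : nat) (O : 'M[R]_n) (s : 'S_n) : bool :=
  tweight O s == tdet O.

Definition pdet (R : realType) (T : comRingType) (n : nat)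
    (O : 'M[R]_n) (A : 'M[T]_n) : T :=
  \sum_(s : 'S_n | appears O s) (-1) ^+ s * \prod_i A i (s i).

Definition Cram (R : realType) (T : comRingType) (n : nat)
    (O : 'M[R]_(n, n.+1)) (A : 'M[T]_(n, n.+1)) (l : 'I_n.+1) : T :=
  pdet (col' l O) (col' l A).

(* Variables 'I_N are partitioned into blocks C_0,...,C_(k-1) by blk. *)
Definition blockdeg (N k : nat) (blk : 'I_N -> 'I_k) (m : 'X_{1..N}) (i : 'I_k) : nat :=
  (\sum_(v : 'I_N | blk v == i) m v)%N.

Definition multihomog (K : ringType) (N k : nat) (blk : 'I_N -> 'I_k)
    (d : 'I_k -> nat) (p : {mpoly K[N]}) : Prop :=
  forall m, m \in msupp p -> forall i, blockdeg blk m i = d i.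

(* Main.v *)
Require Import Defs.
From HB Require Import structures.
From mathcomp Require Import all_boot all_order all_algebra all_fingroup.
From mathcomp Require Import reals.
From mathcomp Require Import complex.
From mathcomp Require Import mpoly.
Import Order.TTheory GRing.Theory Num.Theory.
Local Open Scope ring_scope.

Lemma prod_decomp (K : nzRingType) N n (p : 'I_n -> {mpoly K[N]}) (r : seq 'I_n) x :
  uniq r -> x \in msupp (\prod_(u <- r) p u) ->
  exists f : 'I_n -> 'X_{1..N}, (forall u, u \in r -> f u \in msupp (p u)) /\
    x = (\big[+%MM/0%MM]_(u <- r) f u).
Proof.
elim: r x => [|a r IH] x /=.
  move=> _; rewrite big_nil -[1]/(1%:MP) msupp1 inE => /eqP ->.
  by exists (fun _ => 0%MM); split => //; rewrite big_nil.
move=> /andP[anr ur]; rewrite big_cons => /msuppM_le /allpairsP [[y z] [/= hy hz ->]].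
have [g [hg ->]] := IH z ur hz.
exists (fun u => if u == a then y else g u); split.
  move=> u; rewrite inE; case: eqP => [-> //|_ /= ]; exact: hg.
rewrite big_cons eqxx; congr (_ + _)%MM.
apply: eq_big_seq => u ur'; case: eqP => // eua; by move: anr; rewrite -eua ur'.
Qed.

Arguments prod_decomp {K N n p r x}.

Lemma blk_zero (K : nzRingType) N k (blk : 'I_N -> 'I_k) (d : 'I_k -> nat)
  (p : {mpoly K[N]}) m v :
  multihomog blk d p -> m \in msupp p -> d (blk v) = 0%N -> m v = 0%N.
Proof.
move=> H mp dz; have := H m mp (blk v); rewrite dz /blockdeg (bigD1 v) //=.
by move/eqP; rewrite addn_eq0 => /andP[/eqP].
Qed.
Arguments blk_zero {K N k blk d p m v}.

Lemma mcoeff_sign (K : nzRingType) N (b : bool) (p : {mpoly K[N]}) m :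
  ((-1) ^+ b * p)@_m = (-1) ^+ b * p@_m.
Proof. by case: b; rewrite ?expr0 ?expr1 ?mul1r ?mulN1r ?mcoeffN. Qed.

Lemma msupp_sign (K : nzRingType) N (b : bool) (p : {mpoly K[N]}) m :
  m \in msupp ((-1) ^+ b * p) -> m \in msupp p.
Proof.
rewrite !mcoeff_msupp mcoeff_sign; apply: contraNneq => ->; by rewrite mulr0.
Qed.

Theorem lemma2p10 (R : realType) (N k n : nat) (blk : 'I_N -> 'I_k)
  (A : 'M[{mpoly R[i][N]}]_(n, n.+1)) (d : 'I_n -> 'I_k -> nat)
  (hnz : forall u l, A u l != 0)
  (hhom : forall u l, multihomog blk (d u) (A u l))
  (hdisj : forall u v, u != v -> forall i, (d u i = 0)%N \/ (d v i = 0)%N)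
  (hmon : forall u (l m : 'I_n.+1), l != m ->
     forall x, x \in msupp (A u l) -> x \notin msupp (A u m))
  (O : 'M[R]_(n, n.+1)) :
  (exists D : 'I_k -> nat,
     forall l, Cram O A l != 0 /\ multihomog blk D (Cram O A l)) /\
  (forall (l : 'I_n.+1) (s t : 'S_n), s != t ->
     appears (col' l O) s -> appears (col' l O) t ->
     forall x, x \in msupp (\prod_u A u (lift l (s u))) ->
       x \notin msupp (\prod_u A u (lift l (t u)))) /\
  (forall l m : 'I_n.+1, l != m ->
     forall x, x \in msupp (Cram O A l) -> x \notin msupp (Cram O A m)).
Proof.
have restr : forall (c : 'I_n -> 'I_n.+1) (f : 'I_n -> 'X_{1..N}) x,
    (forall u, f u \in msupp (A u (c u))) -> x = (\big[+%MM/0%MM]_u f u) ->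
    forall u v, f u v = if d u (blk v) == 0%N then 0%N else x v.
  move=> c f x hf -> u v; case: eqP => h; first exact: blk_zero (hhom u (c u)) (hf u) h.
  rewrite mnm_sumE (bigD1 u) //= big1 ?addn0 // => u' hu'.
  apply: (blk_zero (hhom u' (c u')) (hf u')).
  have hn : u != u' by rewrite eq_sym.
  by case: (hdisj u u' hn (blk v)).
have key : forall (c c' : 'I_n -> 'I_n.+1) x,
    x \in msupp (\prod_u A u (c u)) -> x \in msupp (\prod_u A u (c' u)) -> c =1 c'.
  move=> c c' x /(prod_decomp (index_enum_uniq _)) [f [hf ex]].
  move=> /(prod_decomp (index_enum_uniq _)) [g [hg ex']].
  have hf' : forall u, f u \in msupp (A u (c u)) by move=> u; apply: hf; rewrite mem_index_enum.
  have hg' : forall u, g u \in msupp (A u (c' u)) by move=> u; apply: hg; rewrite mem_index_enum.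
  have fg : forall u, f u = g u.
    move=> u; apply/mnmP => v; by rewrite (restr c f x hf' ex) (restr c' g x hg' ex').
  move=> u; case: (eqVneq (c u) (c' u)) => // ne.
  by have := hmon u _ _ ne (f u) (hf' u); rewrite fg (hg' u).
have prod_hom : forall c : 'I_n -> 'I_n.+1,
    multihomog blk (fun i => \sum_u d u i)%N (\prod_u A u (c u)).
  move=> c m /(prod_decomp (index_enum_uniq _)) [f [hf ->]] i.
  rewrite /blockdeg (eq_bigr (fun v => \sum_u f u v)%N); last first.
    by move=> v _; apply: mnm_sumE.
  rewrite exchange_big; apply: eq_bigr => u _; apply: (hhom u (c u)).
  by apply: hf; rewrite mem_index_enum.
have cram_supp : forall l x, x \in msupp (Cram O A l) ->
    exists2 s, appears (col' l O) s & x \in msupp (\prod_u A u (lift l (s u))).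
  move=> l x; rewrite /Cram /pdet => /msupp_sum_le /flattenP [ys /mapP [s]].
  rewrite mem_filter => /andP[aps _] -> /msupp_sign hx; exists s => //.
  by move: hx; under eq_bigr do rewrite mxE.
have cram_coef : forall l x, (Cram O A l)@_x =
    \sum_(s | appears (col' l O) s) (-1) ^+ s * (\prod_u A u (lift l (s u)))@_x.
  move=> l x; rewrite /Cram /pdet raddf_sum; apply: eq_bigr => s _.
  by rewrite /= mcoeff_sign; under eq_bigr do rewrite mxE.
have exapp : forall m (P : 'M[R]_m), exists s, appears P s.
  move=> m P; rewrite /appears /tdet.
  have [s ->] : exists s, \big[Num.max/tweight P 1%g]_(s : 'S_m) tweight P s = tweight P s.
    apply: (big_ind (fun v => exists s, v = tweight P s)); first by exists 1%g.
      move=> x y [s ->] [t ->]; rewrite maxEle; case: ifP => _; by [exists t | exists s].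
    by move=> s _; exists s.
  by exists s.
split.
  exists (fun i => \sum_u d u i)%N => l; split; last first.
    by move=> x /cram_supp [s _ hx]; exact: prod_hom hx.
  have [s0 hs0] := exapp _ (col' l O).
  pose Q0 := \prod_u A u (lift l (s0 u)).
  have Q0nz : Q0 != 0 by apply/prodf_neq0 => u _.
  have hx := mlead_supp Q0nz.
  apply/eqP => /(congr1 (mcoeff (mlead Q0))).
  rewrite cram_coef mcoeff0 (bigD1 s0) // /= [X in _ + X]big1 ?addr0.
    move=> /eqP; rewrite mulf_eq0 signr_eq0 /=; apply/negP; by rewrite -mcoeff_msupp.
  move=> s /andP[_ ss0]; apply/eqP; rewrite mulf_eq0; apply/orP; right.
  apply/eqP/memN_msupp_eq0/negP => hs.
  have e := key _ _ _ hs hx; move/eqP: ss0; apply; apply/permP => u; exact: lift_inj (e u).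
split.
  move=> l s t st _ _ x hs; apply/negP => ht.
  have e := key _ _ _ hs ht; move/eqP: st; apply; apply/permP => u; exact: lift_inj (e u).
move=> l m lm x /cram_supp [s _ hs]; apply/negP => /cram_supp [t _ ht].
have e := key _ _ _ hs ht.
case: (unliftP l m) => [j ej|ej]; last by rewrite ej eqxx in lm.
have := e ((s^-1)%g j); rewrite permKV -ej => /eqP; by rewrite (negbTE (neq_lift _ _)).
Qed.
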